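(* Assume the setting and standing assumptions described in the context. For any given $\Delta\in\mathcal{D}$, $\lim_{\kappa\to+\infty}\rho(\Delta,\kappa)=-\infty$.
   Context: Let $n,m\ge 1$, $B\in\mathbb{Z}^{n\times m}$, $C\in\mathbb{Z}^{m\times n}$. Given bounds $0\le \Delta_j^-\le \Delta_j^+<\infty$ ($j=1,\dots,m$), let $\mathcal{D}$ be the set of diagonal matrices $\Delta=\mathrm{diag}(\Delta_1,\dots,\Delta_m)$ with $\Delta_j^-\le\Delta_j\le\Delta_j^+$. Let $J_2,J_4\in\mathbb{R}^{n\times n}$ be symmetric, with $J_2$ indefinite, $J_4$ negative semidefinite, and such that there exists $\bar\kappa$ with $\bar\kappa^2J_2+\bar\kappa^4J_4$ negative definite. Standing assumption: for every $\Delta\in\mathcal{D}$, $B\Delta C$ is singular and has $n-1$ eigenvalues (with multiplicity) with negative real part, and there is a nonzero $v\ge0$ with $v^\top B=0$. For real $\kappa\ge0$, $\rho(\Delta,\kappa)$ denotes the spectral abscissa (maximum real part of the eigenvalues) of $B\Delta C+\kappa^2J_2+\kappa^4J_4$. *)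

(* Defs.v *)
From HB Require Import structures.
From mathcomp Require Import all_boot all_order all_algebra.
From mathcomp Require Import all_classical all_reals all_analysis.
From mathcomp Require Import complex.
Set Implicit Arguments. Unset Strict Implicit. Unset Printing Implicit Defensive.
Import Order.TTheory GRing.Theory Num.Theory.
Local Open Scope ring_scope.
Local Open Scope classical_set_scope.

Notation Cx R := (complex.complex R).

Definition cmx (R : realType) (n : nat) (A : 'M[R]_n) : 'M[Cx R]_n :=
  map_mx (fun x : R => complex.Complex x 0) A.

(* spectral abscissa: maximum (= supremum of the finite, nonempty set) of the
   real parts of the (complex) eigenvalues, i.e. roots of the char. polynomial *)
Definition spectral_abscissa (R : realType) (n : nat) (A : 'M[R]_n) : R :=
  sup [set complex.Re z | z in [set z : Cx R | root (char_poly (cmx A)) z]].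

Definition eigen_multiset (R : realType) (n : nat) (A : 'M[R]_n) (s : seq (Cx R)) :=
  size s = n /\ char_poly (cmx A) = \prod_(z <- s) ('X - z%:P).

Definition quadform (R : realType) (n : nat) (J : 'M[R]_n) (x : 'rV[R]_n) : R :=
  (x *m J *m x^T) 0 0.

Definition symmetric_mx (R : realType) (n : nat) (J : 'M[R]_n) := J^T = J.
Definition indefinite (R : realType) (n : nat) (J : 'M[R]_n) :=
  (exists x, 0 < quadform J x) /\ (exists y, quadform J y < 0).
Definition neg_semidef (R : realType) (n : nat) (J : 'M[R]_n) :=
  forall x, quadform J x <= 0.
Definition neg_def (R : realType) (n : nat) (J : 'M[R]_n) :=
  forall x, x != 0 -> quadform J x < 0.

Definition rmx (R : realType) (p q : nat) (A : 'M[int]_(p, q)) : 'M[R]_(p, q) :=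
  map_mx (fun z : int => z%:~R) A.

(* Delta in the box D, Delta = diag_mx d *)
Definition in_box (R : realType) (m : nat) (dm dp d : 'rV[R]_m) :=
  forall j, dm 0 j <= d 0 j <= dp 0 j.

Definition Mk (R : realType) (n m : nat) (B : 'M[int]_(n, m)) (C : 'M[int]_(m, n))
  (J2 J4 : 'M[R]_n) (d : 'rV[R]_m) (k : R) : 'M[R]_n :=
  rmx R B *m diag_mx d *m rmx R C + (k ^+ 2) *: J2 + (k ^+ 4) *: J4.

Definition rho (R : realType) (n m : nat) (B : 'M[int]_(n, m)) (C : 'M[int]_(m, n))
  (J2 J4 : 'M[R]_n) (d : 'rV[R]_m) (k : R) : R :=
  spectral_abscissa (Mk B C J2 J4 d k).

(* Main.v *)
Require Import Defs.
From HB Require Import structures.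
From mathcomp Require Import all_boot all_order all_algebra.
From mathcomp Require Import all_classical all_reals all_analysis.
From mathcomp Require Import complex.
From mathcomp Require Import ring lra.
Import Order.TTheory GRing.Theory Num.Theory.
Import numFieldTopology.Exports numFieldNormedType.Exports.
Local Open Scope ring_scope.
Local Open Scope classical_set_scope.

Set Implicit Arguments. Unset Strict Implicit.
Section Aux.
Variable R : realType.

Definition qf n (J : 'M[R]_n) (x : 'rV[R]_n) : R :=
  \sum_j (\sum_i x 0 i * J i j) * x 0 j.
Definition S2 n (x : 'rV[R]_n) : R := \sum_i x 0 i ^+ 2.

Lemma quadformE n (J : 'M[R]_n) x : quadform J x = qf J x.
Proof.
rewrite /quadform /qf !mxE; apply: eq_bigr => j _; rewrite !mxE.
by congr (_ * _); apply: eq_bigr => i _.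
Qed.

Lemma qfD n (J K : 'M[R]_n) x : qf (J + K) x = qf J x + qf K x.
Proof.
rewrite /qf -big_split; apply: eq_bigr => j _ /=; rewrite -mulrDl -big_split.
by congr (_ * _); apply: eq_bigr => i _; rewrite !mxE mulrDr.
Qed.

Lemma qfZ n c (J : 'M[R]_n) x : qf (c *: J) x = c * qf J x.
Proof.
rewrite /qf mulr_sumr; apply: eq_bigr => j _; rewrite mulrA; congr (_ * _).
by rewrite big_distrr /=; apply: eq_bigr => i _; rewrite !mxE; ring.
Qed.

Lemma S2_ge0 n (x : 'rV[R]_n) : 0 <= S2 x.
Proof. by apply: sumr_ge0 => i _; rewrite sqr_ge0. Qed.

Lemma S2_ge_term n (x : 'rV[R]_n) i : x 0 i ^+ 2 <= S2 x.
Proof.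
rewrite /S2 (bigD1 i) //= lerDl; apply: sumr_ge0 => j _; exact: sqr_ge0.
Qed.

Lemma S2Z n c (x : 'rV[R]_n) : S2 (c *: x) = c ^+ 2 * S2 x.
Proof. rewrite /S2 mulr_sumr; apply: eq_bigr => i _; rewrite mxE; ring. Qed.

Lemma qfZx n c (J : 'M[R]_n) x : qf J (c *: x) = c ^+ 2 * qf J x.
Proof.
rewrite /qf mulr_sumr; apply: eq_bigr => j _.
rewrite mulr_suml [in RHS]mulrA [in RHS]mulr_sumr mulr_suml.
by apply: eq_bigr => i _; rewrite !mxE; ring.
Qed.

Lemma S2_eq0 n (x : 'rV[R]_n) : S2 x = 0 -> forall i, x 0 i = 0.
Proof.
move=> h i; have := S2_ge_term x i; rewrite h => hi.
have : x 0 i ^+ 2 = 0 by apply/eqP; rewrite eq_le hi sqr_ge0.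
by move/eqP; rewrite sqrf_eq0 => /eqP.
Qed.

Lemma qf_zero n (J : 'M[R]_n) (x : 'rV[R]_n) : (forall i, x 0 i = 0) -> qf J x = 0.
Proof. by move=> h; rewrite /qf big1 // => j _; rewrite h mulr0. Qed.

Lemma sum_continuous (T : topologicalType) (I : Type) (s : seq I) (F : I -> T -> R) :
  (forall i, continuous (F i)) -> continuous (fun x => \sum_(i <- s) F i x).
Proof.
move=> hF; elim: s => [|a s IH].
  under eq_fun do rewrite big_nil; exact: cst_continuous.
under eq_fun do rewrite big_cons.
by move=> x; apply: continuousD; [exact: hF | exact: IH].
Qed.

Lemma qf_continuous n (J : 'M[R]_n) : continuous (qf J).
Proof.
apply: sum_continuous => j; move=> x; apply: continuousM; last first.
  exact: (@coord_continuous R 1 n 0 j).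
apply: sum_continuous => i {}x; apply: continuousM; last exact: cst_continuous.
exact: (@coord_continuous R 1 n 0 i).
Qed.

Lemma S2_continuous n : continuous (@S2 n).
Proof.
apply: sum_continuous => i x; rewrite /GRing.exp /=.
by apply: continuousM; exact: (@coord_continuous R 1 n 0 i).
Qed.

Lemma negdef_unif n (N : 'M[R]_n) (hn : (1 <= n)%N) :
  (forall x, x != 0 -> qf N x < 0) ->
  exists2 e, 0 < e & forall x, qf N x <= - e * S2 x.
Proof.
move=> hN.
set E := [set x : 'rV[R]_n | S2 x = 1].
have cE : compact E.
  apply: (@subclosed_compact _ E [set v | forall i, (`[-1, 1]%classic : set R) (v ord0 i)]).
  - have := @preimage_closed _ _ (@S2 n) [set x | x = 1] (fun x _ => @S2_continuous n x) (@closed_eq _ 1).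
    by [].
  - apply: (@rV_compact _ _ (fun=> `[(-1 : R), 1]%classic)).
    by move=> _; apply: segment_compact.
  - move=> x /= hx i; have := S2_ge_term x i; rewrite hx => h.
    rewrite in_itv /=; apply/andP; split; nra.
have E0 : E !=set0.
  exists (delta_mx 0 (Ordinal hn)); rewrite /E /= /S2 (bigD1 (Ordinal hn)) //= big1.
    by rewrite !mxE !eqxx expr1n addr0.
  by move=> i /negPf hi; rewrite !mxE hi andbF expr0n.
have [c cinE hc] := EVT_max_rV E0 cE (continuous_subspaceT (@qf_continuous n N)).
have c0 : c != 0.
  apply/eqP => c0; move: cinE; rewrite inE /E /= c0 /S2 big1 => [/eqP|i _].
    by rewrite eq_sym oner_eq0.
  by rewrite mxE expr0n.
have hNc := hN _ c0.
exists (- qf N c); first by rewrite oppr_gt0.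
move=> x; have [hx|hx] := eqVneq (S2 x) 0.
  by rewrite (qf_zero _ (S2_eq0 hx)) hx mulr0.
have sp : 0 < S2 x by rewrite lt_def hx S2_ge0.
set u := (Num.sqrt (S2 x))^-1 *: x.
have hsq : Num.sqrt (S2 x) ^+ 2 = S2 x by rewrite sqr_sqrtr // S2_ge0.
have sq0 : Num.sqrt (S2 x) != 0 by rewrite sqrtr_eq0 -ltNge.
have uE : u \in E.
  by rewrite inE /E /= /u S2Z exprVn hsq mulVf.
have := hc _ uE; rewrite /u qfZx exprVn hsq opprK => h.
have : qf N x = S2 x * ((S2 x)^-1 * qf N x) by rewrite mulrA mulfV // mul1r.
move=> ->; rewrite mulrC.
by rewrite ler_pM2r.
Qed.


Lemma ReD (x y : R[i]) : complex.Re (x + y) = complex.Re x + complex.Re y.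
Proof. by case: x => a b; case: y => c e. Qed.
Lemma ImD (x y : R[i]) : complex.Im (x + y) = complex.Im x + complex.Im y.
Proof. by case: x => a b; case: y => c e. Qed.
Lemma ReM (x y : R[i]) : complex.Re (x * y) = complex.Re x * complex.Re y - complex.Im x * complex.Im y.
Proof. by case: x => a b; case: y => c e. Qed.
Lemma ImM (x y : R[i]) : complex.Im (x * y) = complex.Re x * complex.Im y + complex.Im x * complex.Re y.
Proof. by case: x => a b; case: y => c e. Qed.
Lemma Re0 : complex.Re (0 : R[i]) = 0. Proof. by []. Qed.
Lemma Im0 : complex.Im (0 : R[i]) = 0. Proof. by []. Qed.

Lemma eig_bound n (P : 'M[R]_n) c (z : R[i]) :
  (forall x, qf P x <= c * S2 x) -> root (char_poly (cmx P)) z -> complex.Re z <= c.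
Proof.
move=> hP; rewrite -eigenvalue_root_char => /eigenvalueP [v hv v0].
set a := \row_i complex.Re (v 0 i); set b := \row_i complex.Im (v 0 i).
have hRe j : \sum_i a 0 i * P i j = complex.Re z * a 0 j - complex.Im z * b 0 j.
  have := congr1 (fun M : 'M[R[i]]_(1, n) => complex.Re (M 0 j)) hv; rewrite /= !mxE.
  rewrite (big_morph _ (@ReD) Re0) ReM => h; rewrite -h.
  by apply: eq_bigr => i _; rewrite /a /cmx !mxE ReM /=; ring.
have hIm j : \sum_i b 0 i * P i j = complex.Re z * b 0 j + complex.Im z * a 0 j.
  have := congr1 (fun M : 'M[R[i]]_(1, n) => complex.Im (M 0 j)) hv; rewrite /= !mxE.
  rewrite (big_morph _ (@ImD) Im0) ImM => h; rewrite -h.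
  by apply: eq_bigr => i _; rewrite /b /cmx !mxE ImM /=; ring.
have key : qf P a + qf P b = complex.Re z * (S2 a + S2 b).
  rewrite /qf /S2 -big_split -big_split mulr_sumr /=; apply: eq_bigr => j _.
  by rewrite hRe hIm; ring.
have pos : 0 < S2 a + S2 b.
  case: (pickP (fun i => v 0 i != 0)) => [i vi | h]; last first.
    by case/negP: v0; apply/eqP/matrixP => i' j; rewrite (ord1 i') mxE; apply/eqP; have := h j => /negbFE.
  have ha := S2_ge_term a i; have hb := S2_ge_term b i.
  suff : 0 < a 0 i ^+ 2 + b 0 i ^+ 2 by move=> ?; lra.
  rewrite lt_def addr_ge0 ?sqr_ge0 // andbT; apply/negP => h0.
  move: (h0); rewrite paddr_eq0 ?sqr_ge0 // !sqrf_eq0 /a /b !mxE => /andP[/eqP ha0 /eqP hb0].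
  have : v 0 i = 0 by move: ha0 hb0; case: (v 0 i) => x y /= -> ->.
  by move/eqP; rewrite (negPf vi).
have := hP a; have := hP b => h1 h2.
have : complex.Re z * (S2 a + S2 b) <= c * (S2 a + S2 b) by rewrite -key; lra.
by rewrite ler_pM2r.
Qed.

Lemma elem_bound (a u w S : R) : u ^+ 2 <= S -> w ^+ 2 <= S -> u * a * w <= `|a| * S.
Proof.
move=> hu hw; case: (ger0P a) => ha.
  have := mulr_ge0 ha (sqr_ge0 (u - w)); nra.
have ha' : 0 <= - a by lra.
have := mulr_ge0 ha' (sqr_ge0 (u + w)); nra.
Qed.

Lemma qf_le_K n (A : 'M[R]_n) x : qf A x <= (\sum_j \sum_i `|A i j|) * S2 x.
Proof.
rewrite /qf mulr_suml; apply: ler_sum => j _; rewrite !mulr_suml; apply: ler_sum => i _.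
exact: elem_bound (S2_ge_term x i) (S2_ge_term x j).
Qed.

End Aux.

Theorem lemma1 (R : realType) (n m : nat) (hn : (1 <= n)%N) (hm : (1 <= m)%N)
  (B : 'M[int]_(n, m)) (C : 'M[int]_(m, n)) (dm dp : 'rV[R]_m)
  (hdm : forall j, 0 <= dm 0 j) (hdmp : forall j, dm 0 j <= dp 0 j)
  (J2 J4 : 'M[R]_n)
  (hJ2s : symmetric_mx J2) (hJ4s : symmetric_mx J4)
  (hJ2 : indefinite J2) (hJ4 : neg_semidef J4)
  (hkbar : exists kb : R, neg_def (kb ^+ 2 *: J2 + kb ^+ 4 *: J4))
  (hsing : forall d : 'rV[R]_m, in_box dm dp d ->
      \det (rmx R B *m diag_mx d *m rmx R C) = 0)
  (hspec : forall d : 'rV[R]_m, in_box dm dp d ->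
      exists s, eigen_multiset (rmx R B *m diag_mx d *m rmx R C) s /\
                count (fun z => complex.Re z < 0) s = n.-1)
  (hv : exists v : 'rV[R]_n, v != 0 /\ (forall i, 0 <= v 0 i) /\ v *m rmx R B = 0)
  (d : 'rV[R]_m) (hd : in_box dm dp d) :
  rho B C J2 J4 d k @[k --> +oo] --> -oo.
Proof.
case: hkbar => kb hkb.
set N := kb ^+ 2 *: J2 + kb ^+ 4 *: J4.
have hN : forall x, x != 0 -> qf N x < 0 by move=> x; rewrite -quadformE; exact: hkb.
have [e e0 he] := negdef_unif hn hN.
have hq4 : forall x, qf J4 x <= 0 by move=> x; rewrite -quadformE; exact: hJ4.
set x0 : 'rV[R]_n := delta_mx 0 (Ordinal hn).
have x00 : x0 != 0.
  apply/eqP => /matrixP /(_ 0 (Ordinal hn)); rewrite !mxE !eqxx /= => /eqP.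
  by rewrite oner_eq0.
have kb0 : kb != 0.
  apply/eqP => kb0; have := hN _ x00; rewrite /N kb0 qfD !qfZ !expr0n /=.
  by rewrite !mul0r addr0 ltxx.
set s := kb ^+ 2.
have s0 : 0 < s by rewrite /s lt_def sqr_ge0 sqrf_eq0 kb0.
pose A0 := rmx R B *m diag_mx d *m rmx R C.
pose K := \sum_j \sum_i `|A0 i j|.
set c := e / s.
have c0 : 0 < c by rewrite /c divr_gt0.
have hc : c * s = e by rewrite /c mulrVK // unitfE lt0r_neq0.
have bound : forall k, s <= k ^+ 2 -> forall x,
    qf (Mk B C J2 J4 d k) x <= (K - c * k ^+ 2) * S2 x.
  move=> k hk x; rewrite /Mk !qfD !qfZ.
  have h1 : qf (rmx R B *m diag_mx d *m rmx R C) x <= K * S2 x := qf_le_K _ x.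
  have e4' : kb ^+ 4 = s ^+ 2 by rewrite /s -exprM.
  have h2 : s * qf J2 x + s ^+ 2 * qf J4 x <= - e * S2 x.
    by have := he x; rewrite /N qfD !qfZ e4'.
  have h4 := hq4 x.
  have e4 : k ^+ 4 = (k ^+ 2) ^+ 2 by rewrite -exprM.
  rewrite e4.
  move: hk h1 h2 h4; set t := k ^+ 2; set q2 := qf J2 x; set q4 := qf J4 x.
  set S := S2 x; set qA := qf _ x => hk h1 h2 h4.
  have t0 : 0 <= t by lra.
  have A1 : t * (s * q2 + s ^+ 2 * q4) <= t * (- e * S) by apply: ler_wpM2l.
  have A2 : 0 <= s * t * (t - s) * (- q4).
    by apply: mulr_ge0; [apply: mulr_ge0; [apply: mulr_ge0|]|]; lra.
  have A4 : s * c * t * S = e * t * S by rewrite -hc; ring.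
  suff : t * q2 + t ^+ 2 * q4 <= - c * t * S by move=> hh; nra.
  rewrite -(ler_pM2l s0); nra.
have rho_le : forall k, s <= k ^+ 2 -> rho B C J2 J4 d k <= K - c * k ^+ 2.
  move=> k hk; rewrite /rho /spectral_abscissa; apply: ge_sup.
    have : size (char_poly (cmx (Mk B C J2 J4 d k))) != 1%N.
      by rewrite size_char_poly eqSS -lt0n.
    by move/closed_rootP => [z hz]; exists (complex.Re z); exists z.
  move=> y [z hz <-]; apply: (eig_bound (bound k hk)); exact: hz.
apply/cvgrNyPle => A.
exists (`|kb| + 1 + `|(K - A) / c|); split; first exact: num_real.
move=> k hk.
have hk1 : `|kb| < k by have := normr_ge0 ((K - A) / c); lra.
have hk2 : 1 < k by have := normr_ge0 ((K - A) / c); have := normr_ge0 kb; lra.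
have hk3 : (K - A) / c < k.
  have := ler_norm ((K - A) / c); have := normr_ge0 kb; lra.
have hk3' : K - A < k * c by rewrite -ltr_pdivrMr.
have hs : s <= k ^+ 2.
  rewrite /s -real_normK ?num_real //; have := normr_ge0 kb; nra.
apply: le_trans (rho_le k hs) _.
have hkk : 0 <= c * (k * (k - 1)) by apply: mulr_ge0; [lra | apply: mulr_ge0; lra].
have -> : c * k ^+ 2 = c * (k * (k - 1)) + k * c by ring.
lra.
Qed.
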